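(* Let $(\Omega,Z)$, with $\Omega:[0,1]\times[t_0,\infty)\to\mathbb{R}^2$ and $Z:[t_0,\infty)\to\mathbb{R}^n$, be a (classical) solution of the target system \begin{align*} \partial_t \Omega(x,t) &= E\,\partial_x^2 \Omega(x,t), && x\in(0,1),\\ \dot Z(t) &= (A+B\Gamma_0)Z(t) + B\Theta\,\Omega(0,t),\\ \alpha\,\partial_x\Omega(0,t) &= -\beta\,\Omega(0,t),\\ \Omega(1,t) &= 0 . \end{align*} Then the trivial solution $(\Omega,Z)\equiv 0$ is exponentially stable in the $L^2\times\mathbb{R}^n$ norm: there exist constants $\Pi,\mu>0$, independent of the solution, such that for all $t\ge t_0$ $$\|(\Omega(\cdot,t),Z(t))\|\le \Pi\, e^{-\mu(t-t_0)}\,\|(\Omega(\cdot,t_0),Z(t_0))\|.$$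
   Context: Fix $\varepsilon>0$ and $y_0\in(-1,0)$. Set $\varepsilon_1=\varepsilon/(1+y_0)^2$, $\varepsilon_2=\varepsilon/(1-y_0)^2$ (so $\varepsilon_1>\varepsilon_2>0$), $a=(1+y_0)/(1-y_0)\in(0,1)$, $E=\mathrm{diag}(\varepsilon_1,\varepsilon_2)$, $\alpha=\begin{pmatrix}1&a\\0&0\end{pmatrix}$, $\beta=\begin{pmatrix}0&0\\1&-1\end{pmatrix}$, and $\Theta=(\theta,\ 1-\theta)$ for a fixed $\theta\in[0,1]$. Thus the boundary condition at $x=0$ means $\partial_x\Omega_1(0,t)+a\,\partial_x\Omega_2(0,t)=0$ and $\Omega_1(0,t)=\Omega_2(0,t)$. $A\in\mathbb{R}^{n\times n}$, $B\in\mathbb{R}^{n\times 1}$, and $\Gamma_0\in\mathbb{R}^{1\times n}$ is such that $A+B\Gamma_0$ is Hurwitz. For $f\in L^2(0,1;\mathbb{R}^2)$ and $v\in\mathbb{R}^n$, $\|(f,v)\|=\big(\|f\|_{L^2}^2+|v|_2^2\big)^{1/2}$ with $\|f\|_{L^2}^2=\int_0^1|f(x)|_2^2dx$. *)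

(* Defs.v *)
From Stdlib Require Import Reals Lra.
Open Scope R_scope.

Fixpoint rsum (n : nat) (f : nat -> R) : R :=
  match n with O => 0 | S k => rsum k f + f k end.

(* Vectors of R^n are functions nat -> R (only indices < n matter);
   n x n matrices are nat -> nat -> R. *)
Definition mat_vec (n : nat) (M : nat -> nat -> R) (v : nat -> R) (i : nat) : R :=
  rsum n (fun j => M i j * v j).

(* The closed-loop matrix A + B Gamma0, with B : n x 1 and Gamma0 : 1 x n. *)
Definition closed_loop (A : nat -> nat -> R) (B : nat -> R) (G0 : nat -> R) :
  nat -> nat -> R := fun i j => A i j + B i * G0 j.

(* Hurwitz: every (complex) eigenvalue a + i b has a < 0.  A complex
   eigenvector u + i w (u, w real, not both zero) satisfies
   M u = a u - b w and M w = b u + a w. *)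
Definition Hurwitz (n : nat) (M : nat -> nat -> R) : Prop :=
  forall (a b : R) (u w : nat -> R),
    (exists i, (i < n)%nat /\ (u i <> 0 \/ w i <> 0)) ->
    (forall i, (i < n)%nat ->
       mat_vec n M u i = a * u i - b * w i /\
       mat_vec n M w i = b * u i + a * w i) ->
    a < 0.

Definition jcont_on (D : R -> R -> Prop) (f : R -> R -> R) : Prop :=
  forall x t, D x t -> forall e, e > 0 -> exists d, d > 0 /\
    forall y s, D y s -> Rabs (y - x) < d -> Rabs (s - t) < d ->
      Rabs (f y s - f x t) < e.

(* f has derivative l at x relative to the set D (one-sided at endpoints). *)
Definition deriv_within (D : R -> Prop) (f : R -> R) (x l : R) : Prop :=
  limit1_in (fun h => (f (x + h) - f x) / h) (fun h => h <> 0 /\ D (x + h)) l 0.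

Definition I01 (x : R) : Prop := 0 <= x <= 1.

Definition target_solution (eps y0 theta : R) (n : nat)
  (A : nat -> nat -> R) (B : nat -> R) (G0 : nat -> R) (t0 : R)
  (W1 W2 : R -> R -> R) (Z : R -> nat -> R) : Prop :=
  let eps1 := eps / (1 + y0) ^ 2 in
  let eps2 := eps / (1 - y0) ^ 2 in
  let a := (1 + y0) / (1 - y0) in
  let Dc := fun x t => I01 x /\ t0 <= t in
  let Do := fun x t => I01 x /\ t0 < t in
  exists Wx1 Wx2 Wxx1 Wxx2 : R -> R -> R,
    jcont_on Dc W1 /\ jcont_on Dc W2 /\
    jcont_on Do Wx1 /\ jcont_on Do Wx2 /\
    jcont_on Do Wxx1 /\ jcont_on Do Wxx2 /\
    (forall x t, I01 x -> t0 < t ->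
       deriv_within I01 (fun y => W1 y t) x (Wx1 x t) /\
       deriv_within I01 (fun y => W2 y t) x (Wx2 x t) /\
       deriv_within I01 (fun y => Wx1 y t) x (Wxx1 x t) /\
       deriv_within I01 (fun y => Wx2 y t) x (Wxx2 x t)) /\
    (forall x t, 0 < x < 1 -> t0 < t ->
       derivable_pt_lim (fun s => W1 x s) t (eps1 * Wxx1 x t) /\
       derivable_pt_lim (fun s => W2 x s) t (eps2 * Wxx2 x t)) /\
    (* boundary conditions: alpha d_x Omega(0,t) = - beta Omega(0,t), Omega(1,t)=0 *)
    (forall t, t0 < t ->
       Wx1 0 t + a * Wx2 0 t = 0 /\
       W1 0 t = W2 0 t /\
       W1 1 t = 0 /\ W2 1 t = 0) /\
    (forall i, (i < n)%nat -> forall t, t0 <= t ->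
       limit1_in (fun s => Z s i) (fun s => t0 <= s) (Z t i) t) /\
    (forall i, (i < n)%nat -> forall t, t0 < t ->
       derivable_pt_lim (fun s => Z s i) t
         (mat_vec n (closed_loop A B G0) (Z t) i
          + B i * (theta * W1 0 t + (1 - theta) * W2 0 t))).

Definition sq_norm {W1 W2 : R -> R -> R} (n : nat) (Z : R -> nat -> R) (t : R)
  (pr : Riemann_integrable (fun x => W1 x t ^ 2 + W2 x t ^ 2) 0 1) : R :=
  RiemannInt pr + rsum n (fun i => Z t i ^ 2).

(* Main.v *)
Require Import Defs.
From Stdlib Require Import Reals Lra Lia Classical ClassicalEpsilon.
Open Scope R_scope.
From HB Require Import structures.
From mathcomp Require all_boot all_order all_algebra Rstruct ring.
From mathcomp Require ssrnat ssrbool sesquilinear spectral.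
From mathcomp.real_closed Require complex.

Definition lin (n:nat) (g z : nat -> R) := rsum n (fun i => g i * z i).

Module LAmc.
Import all_boot all_order all_algebra Rstruct complex ring sesquilinear spectral.
Import GRing.Theory Num.Theory.
Local Open Scope complex_scope.
Local Open Scope ring_scope.
Local Open Scope sesquilinear_scope.

Lemma rsum_big n (f : nat -> R) : rsum n f = \sum_(i < n) f i.
Proof. elim: n => [|n IH] /=; first by rewrite big_ord0. by rewrite big_ord_recr /= IH. Qed.

Lemma ReD (x y : R[i]) : complex.Re (x + y) = complex.Re x + complex.Re y.
Proof. by case: x => ? ?; case: y. Qed.
Lemma ImD (x y : R[i]) : complex.Im (x + y) = complex.Im x + complex.Im y.
Proof. by case: x => ? ?; case: y. Qed.
Lemma ReM (x y : R[i]) : complex.Re (x * y) = complex.Re x * complex.Re y - complex.Im x * complex.Im y.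
Proof. by case: x => ? ?; case: y. Qed.
Lemma ImM (x y : R[i]) : complex.Im (x * y) = complex.Re x * complex.Im y + complex.Im x * complex.Re y.
Proof. case: x => a b; case: y => c d /=. ring. Qed.
Lemma ReC (r : R) : complex.Re (r%:C) = r. Proof. by []. Qed.
Lemma ImC (r : R) : complex.Im (r%:C) = 0. Proof. by []. Qed.
Lemma Re_sum m (F : 'I_m -> R[i]) : complex.Re (\sum_(i < m) F i) = \sum_(i < m) complex.Re (F i).
Proof. apply: (big_rec2 (fun a b => complex.Re a = b)) => // i a b _ <-; by rewrite ReD. Qed.
Lemma Im_sum m (F : 'I_m -> R[i]) : complex.Im (\sum_(i < m) F i) = \sum_(i < m) complex.Im (F i).
Proof. apply: (big_rec2 (fun a b => complex.Im a = b)) => // i a b _ <-; by rewrite ImD. Qed.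
Lemma ReCM (r : R) (y : R[i]) : complex.Re (r%:C * y) = r * complex.Re y.
Proof. by rewrite ReM ReC ImC mul0r subr0. Qed.
Lemma ImCM (r : R) (y : R[i]) : complex.Im (r%:C * y) = r * complex.Im y.
Proof. by rewrite ImM ReC ImC mul0r addr0. Qed.

Section S.
Variable (n' : nat) (M : nat -> nat -> R).
Local Notation n := n'.+1.
Definition Amx : 'M[R[i]]_n := \matrix_(i, j) ((M j i)%:C).
Definition zc (z : nat -> R) : 'rV[R[i]]_n := \row_(i < n) ((z i)%:C).

Lemma zcM (z : nat -> R) : zc (mat_vec n M z) = zc z *m Amx.
Proof.
apply/rowP => j; rewrite !mxE /mat_vec rsum_big.
rewrite (@rmorph_sum _ _ (real_complex R)).
apply: eq_bigr => i _; rewrite !mxE rmorphM mulrC.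
done.
Qed.

Variable P : 'M[R[i]]_n.
Hypothesis Pu : P \is unitarymx.
Lemma PPs : P *m P^t* = 1%:M. Proof. by apply/unitarymxP. Qed.
Lemma PsP : P^t* *m P = 1%:M.
Proof. by rewrite -invmx_unitary // mulVmx // unitarymx_unit. Qed.

Definition Ps := P^t*.
Definition T := P *m Amx *m Ps.
Definition yv (z : nat -> R) := zc z *m Ps.

Lemma yvM z : yv (mat_vec n M z) = yv z *m T.
Proof.
by rewrite /yv zcM /T !mulmxA -(mulmxA (zc z) Ps P) /Ps PsP mulmx1.
Qed.

Definition Gr (l i : nat) : R := complex.Re (Ps (inord i) (inord l)).
Definition Gi (l i : nat) : R := complex.Im (Ps (inord i) (inord l)).
Definition Tr (i l : nat) : R := complex.Re (T (inord i) (inord l)).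
Definition Ti (i l : nat) : R := complex.Im (T (inord i) (inord l)).

Lemma linGr z l : (l < n)%N -> lin n (Gr l) z = complex.Re (yv z 0 (inord l)).
Proof.
move=> hl; rewrite /lin rsum_big /yv !mxE Re_sum; apply: eq_bigr => i _.
rewrite !mxE ReCM /Gr /Ps !mxE inord_val; exact: mulrC.
Qed.
Lemma linGi z l : (l < n)%N -> lin n (Gi l) z = complex.Im (yv z 0 (inord l)).
Proof.
move=> hl; rewrite /lin rsum_big /yv !mxE Im_sum; apply: eq_bigr => i _.
rewrite !mxE ImCM /Gi /Ps !mxE inord_val; exact: mulrC.
Qed.

Lemma linGrM z l : (l < n)%N -> lin n (Gr l) (mat_vec n M z) =
  rsum n (fun i => lin n (Gr i) z * Tr i l - lin n (Gi i) z * Ti i l)%R.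
Proof.
move=> hl; rewrite linGr // yvM mxE Re_sum rsum_big; apply: eq_bigr => i _.
rewrite ReM linGr // linGi // /Tr /Ti !inord_val //.
Qed.
Lemma linGiM z l : (l < n)%N -> lin n (Gi l) (mat_vec n M z) =
  rsum n (fun i => lin n (Gr i) z * Ti i l + lin n (Gi i) z * Tr i l)%R.
Proof.
move=> hl; rewrite linGi // yvM mxE Im_sum rsum_big; apply: eq_bigr => i _.
rewrite ImM linGr // linGi // /Tr /Ti !inord_val //.
Qed.

Lemma ReMconj (y : R[i]) : complex.Re (y * y^*) = complex.Re y * complex.Re y + complex.Im y * complex.Im y.
Proof. case: y => a b /=. ring. Qed.

Lemma normid z : rsum n (fun l => lin n (Gr l) z * lin n (Gr l) z + lin n (Gi l) z * lin n (Gi l) z)%R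
   = rsum n (fun i => z i * z i)%R.
Proof.
rewrite !rsum_big.
have -> : \sum_(l < n) (lin n (Gr l) z * lin n (Gr l) z + lin n (Gi l) z * lin n (Gi l) z)%R
   = complex.Re ((yv z *m (yv z)^t*) 0 0).
  rewrite mxE Re_sum; apply: eq_bigr => l _.
  rewrite linGr // linGi // inord_val !mxE.
  by rewrite -ReMconj.
rewrite /yv trmx_mul map_mxM mulmxA -(mulmxA (zc z)) /Ps trmxCK PsP mulmx1.
rewrite mxE Re_sum; apply: eq_bigr => i _.
by rewrite !mxE ReMconj ReC ImC mulr0 addr0.
Qed.

Hypothesis Ptrig : is_trig_mx T.

Lemma Tr_low i l : (i < l)%N -> (l < n)%N -> Tr i l = 0 /\ Ti i l = 0.
Proof.
move=> hil hl.
have hi : (i < n)%N by apply: ltn_trans hl.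
have E : T (inord i) (inord l) = 0.
  by move/is_trig_mxP: Ptrig; apply; rewrite !inordK.
by rewrite /Tr /Ti E.
Qed.

Lemma Tr_neg (HH : Hurwitz n M) l : (l < n)%N -> Tr l l < 0.
Proof.
move=> hl; set l' : 'I_n := inord l.
set lam := T l' l'.
have -> : Tr l l = complex.Re lam by [].
have eig : eigenvalue T lam.
  rewrite eigenvalue_root_char char_poly_trig // /root horner_prod (bigD1 l') //=.
  by rewrite !hornerE subrr mul0r.
have [v vT vN0] := eigenvalueP eig.
set w := v *m P.
have PA : P *m Amx = T *m P by rewrite /T -!mulmxA /Ps PsP mulmx1.
have wA : w *m Amx = lam *: w by rewrite /w -mulmxA PA mulmxA vT -scalemxAl.
have wN0 : w != 0.
  apply: contraNneq vN0 => w0.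
  have -> : v = w *m Ps by rewrite /w -mulmxA /Ps PPs mulmx1.
  by rewrite w0 mul0mx.
have [j wj] : exists j, w 0 j != 0.
  case: (pickP (fun j => w 0 j != 0)) => [j wj | H]; first by exists j.
  exfalso; move/eqP: wN0; apply; apply/rowP => j.
  by move: (H j) => /= /negbFE /eqP ->; rewrite mxE.
clearbody w lam.
pose u (k : nat) := complex.Re (w 0 (inord k)).
pose wv (k : nat) := complex.Im (w 0 (inord k)).
have key : forall i, (i < n)%N ->
   \sum_(k < n) M i k * u k = complex.Re lam * u i - complex.Im lam * wv i /\
   \sum_(k < n) M i k * wv k = complex.Im lam * u i + complex.Re lam * wv i.
  move=> i hi.
  have Ewa : (w *m Amx) 0 (inord i) = lam * w 0 (inord i) by rewrite wA mxE.
  move: Ewa; rewrite mxE => Ewa.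
  split.
  - have := congr1 (@complex.Re R) Ewa; rewrite Re_sum ReM => <-.
    apply: eq_bigr => k _; rewrite /u inord_val /Amx mxE inordK // ReM ReC ImC mulr0 subr0.
    by rewrite mulrC.
  - have := congr1 (@complex.Im R) Ewa; rewrite Im_sum ImM addrC => <-.
    apply: eq_bigr => k _; rewrite /wv inord_val /Amx mxE inordK // ImM ReC ImC mulr0 add0r.
    by rewrite mulrC.
apply/RltP; apply: (HH (complex.Re lam) (complex.Im lam) u wv).
- exists (val j); split; first by apply/ltP; exact: ltn_ord.
  rewrite /u /wv inord_val.
  move: wj; case: (w 0 j) => a b /= hab.
  case: (Req_dec a 0) => [a0|]; last by left.
  right => b0; move: hab; by rewrite a0 b0 eqxx.
- move=> i /ltP hi; rewrite /mat_vec !rsum_big.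
  by have [E1 E2] := key i hi; split; [exact: E1 | exact: E2].
Qed.

End S.

Lemma LA_mc (n : nat) (M : nat -> nat -> R) : Hurwitz n M ->
 exists Gr Gi Tr Ti : nat -> nat -> R,
 (forall i l, (i < l)%N -> (l < n)%N -> Tr i l = 0 /\ Ti i l = 0) /\
 (forall l, (l < n)%N -> Tr l l < 0) /\
 (forall z, rsum n (fun l => lin n (Gr l) z * lin n (Gr l) z + lin n (Gi l) z * lin n (Gi l) z)%R = rsum n (fun i => z i * z i)%R) /\
 (forall z l, (l < n)%N -> lin n (Gr l) (mat_vec n M z) = rsum n (fun i => lin n (Gr i) z * Tr i l - lin n (Gi i) z * Ti i l)%R /\ lin n (Gi l) (mat_vec n M z) = rsum n (fun i => lin n (Gr i) z * Ti i l + lin n (Gi i) z * Tr i l)%R).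
Proof.
case: n => [|n'] HH.
  exists (fun _ _ => 0), (fun _ _ => 0), (fun _ _ => 0), (fun _ _ => 0).
  by split; [|split; [|split]].
have [Q Qu Qtr] := spectral.Schur (Amx n' M) (ltn0Sn n').
rewrite /similar_to conjymx // in Qtr.
exists (@Gr n' Q), (@Gi n' Q), (@Tr n' M Q), (@Ti n' M Q).
split; first by move=> i l; apply: Tr_low.
split; first by move=> l; apply: Tr_neg.
split; first by move=> z; apply: normid.
by move=> z l hl; split; [apply: linGrM | apply: linGiM].
Qed.
End LAmc.


From Coquelicot Require Import Coquelicot.


Lemma rsum_ext n f g : (forall i, (i < n)%nat -> f i = g i) -> rsum n f = rsum n g.
Proof. induction n; simpl; intros H; auto. rewrite IHn by (intros; apply H; lia). rewrite H by lia. auto. Qed.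
Lemma rsum_le n f g : (forall i, (i < n)%nat -> f i <= g i) -> rsum n f <= rsum n g.
Proof. induction n; simpl; intros H; [lra|]. assert (rsum n f <= rsum n g) by (apply IHn; intros; apply H; lia). assert (f n <= g n) by (apply H; lia). lra. Qed.
Lemma rsum_plus n f g : rsum n (fun i => f i + g i) = rsum n f + rsum n g.
Proof. induction n; simpl; [lra|]. rewrite IHn; lra. Qed.
Lemma rsum_opp n f : rsum n (fun i => - f i) = - rsum n f.
Proof. induction n; simpl; [lra|]. rewrite IHn; lra. Qed.
Lemma rsum_minus n f g : rsum n (fun i => f i - g i) = rsum n f - rsum n g.
Proof. induction n; simpl; [lra|]. rewrite IHn; lra. Qed.
Lemma rsum_scal n c f : rsum n (fun i => c * f i) = c * rsum n f.
Proof. induction n; simpl; [lra|]. rewrite IHn; lra. Qed.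
Lemma rsum_const n c : rsum n (fun _ => c) = INR n * c.
Proof. induction n; simpl rsum; [simpl; lra|]. rewrite IHn, S_INR; lra. Qed.
Lemma rsum_nonneg n f : (forall i, (i < n)%nat -> 0 <= f i) -> 0 <= rsum n f.
Proof. intros H. replace 0 with (rsum n (fun _ => 0)). apply rsum_le; auto.
  rewrite rsum_const; lra. Qed.
Lemma rsum_term n f i : (forall j, (j < n)%nat -> 0 <= f j) -> (i < n)%nat -> f i <= rsum n f.
Proof. induction n; intros H Hi; [lia|]. simpl.
  destruct (Nat.eq_dec i n). subst. assert (0 <= rsum n f) by (apply rsum_nonneg; intros; apply H; lia). lra.
  assert (f i <= rsum n f) by (apply IHn; [intros; apply H; lia| lia]). assert (0 <= f n) by (apply H; lia). lra. Qed.
Lemma rsum_single n l a : (l < n)%nat -> rsum n (fun i => if Nat.eq_dec i l then a else 0) = a.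
Proof. induction n; intros H; [lia|]. simpl. destruct (Nat.eq_dec n l).
  subst. replace (rsum l _) with (rsum l (fun _ => 0)). rewrite rsum_const; lra.
  apply rsum_ext; intros. destruct (Nat.eq_dec i l); [lia|auto].
  rewrite IHn by lia. lra. Qed.

Lemma min_pos n f : (forall l, (l < n)%nat -> f l < 0) -> exists lam, 0 < lam /\ forall l, (l < n)%nat -> f l <= - lam.
Proof. induction n; intros H. exists 1; split; [lra| intros; lia].
  destruct IHn as [lam [H1 H2]]. intros; apply H; lia.
  assert (f n < 0) by (apply H; lia).
  exists (Rmin lam (- f n)). split. apply Rmin_glb_lt; lra.
  intros l Hl. destruct (Nat.eq_dec l n). subst. generalize (Rmin_r lam (- f n)); lra.
  generalize (Rmin_l lam (- f n)) (H2 l ltac:(lia)); lra. Qed.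

Lemma young a b eta : 0 < eta -> a * b <= (eta * (a * a) + b * b / eta) / 2.
Proof. intros He. assert (0 <= (eta * a - b) * (eta * a - b) / eta).
  unfold Rdiv; apply Rmult_le_pos; [apply Rle_0_sqr| left; apply Rinv_0_lt_compat; lra].
  assert ((eta * a - b) * (eta * a - b) / eta = eta * (a*a) + b * b / eta - 2 * (a * b)) by (field; lra). lra. Qed.

Lemma absyoung a b eta : 0 < eta -> Rabs (a * b) <= (eta * (a * a) + b * b / eta) / 2.
Proof. intros He. unfold Rabs; destruct (Rcase_abs (a*b)).
  replace (- (a*b)) with ((-a) * b) by ring. replace (a * a) with ((-a)*(-a)) by ring. apply young; auto.
  apply young; auto. Qed.


Lemma rsum_mult_r n f c : rsum n f * c = rsum n (fun i => f i * c).
Proof. induction n; simpl; [lra|]. rewrite <- IHn; lra. Qed.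

Lemma TRI n (Tr Ti : nat -> nat -> R) :
  (forall i l, (i < l)%nat -> (l < n)%nat -> Tr i l = 0 /\ Ti i l = 0) ->
  (forall l, (l < n)%nat -> Tr l l < 0) ->
  exists (k : nat -> R) (c : R), 0 < c /\ (forall l, 0 < k l) /\
  forall yr yi : nat -> R,
  rsum n (fun l => k l * (rsum n (fun i => yr i * Tr i l - yi i * Ti i l) * yr l
                        + rsum n (fun i => yr i * Ti i l + yi i * Tr i l) * yi l))
  <= - c * rsum n (fun l => k l * (yr l * yr l + yi l * yi l)).
Proof.
intros Hlow Hdiag.
destruct (min_pos n (fun l => Tr l l) Hdiag) as [lam [Hlam Hlam2]].
set (tau := 1 + rsum n (fun i => rsum n (fun l => Rabs (Tr i l) + Rabs (Ti i l)))).
assert (Htau : forall i l, (i < n)%nat -> (l < n)%nat -> Rabs (Tr i l) <= tau /\ Rabs (Ti i l) <= tau).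
{ intros i l Hi Hl.
  assert (Rabs (Tr i l) + Rabs (Ti i l) <= rsum n (fun l => Rabs (Tr i l) + Rabs (Ti i l))).
  { apply (rsum_term n (fun l => Rabs (Tr i l) + Rabs (Ti i l))); auto.
    intros; generalize (Rabs_pos (Tr i j)) (Rabs_pos (Ti i j)); lra. }
  assert (rsum n (fun l => Rabs (Tr i l) + Rabs (Ti i l)) <= rsum n (fun i => rsum n (fun l => Rabs (Tr i l) + Rabs (Ti i l)))).
  { apply (rsum_term n (fun i => rsum n (fun l => Rabs (Tr i l) + Rabs (Ti i l)))); auto.
    intros; apply rsum_nonneg; intros; generalize (Rabs_pos (Tr j i0)) (Rabs_pos (Ti j i0)); lra. }
  generalize (Rabs_pos (Tr i l)) (Rabs_pos (Ti i l)). unfold tau; lra. }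
assert (Htau0 : 1 <= tau).
{ unfold tau. assert (0 <= rsum n (fun i => rsum n (fun l => Rabs (Tr i l) + Rabs (Ti i l)))); [|lra].
  apply rsum_nonneg; intros; apply rsum_nonneg; intros; generalize (Rabs_pos (Tr i i0)) (Rabs_pos (Ti i i0)); lra. }
set (N := INR n + 1).
assert (HN : INR n <= N /\ 0 < N) by (unfold N; generalize (pos_INR n); lra).
set (eta := lam / (4 * N * tau)).
assert (Heta : 0 < eta) by (unfold eta; apply Rdiv_lt_0_compat; nra).
set (rho := 1 + 4 * N * tau / (eta * lam)).
assert (Hrho1 : 1 <= rho).
{ unfold rho. assert (0 <= 4 * N * tau / (eta * lam)); [|lra].
  apply Rlt_le, Rdiv_lt_0_compat; nra. }
assert (Hrho2 : 4 * N * tau <= rho * eta * lam).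
{ unfold rho. replace ((1 + 4 * N * tau / (eta * lam)) * eta * lam) with (eta * lam + 4 * N * tau) by (field; nra). nra. }
exists (fun l => rho ^ l), (lam / 2). split; [lra|]. split.
{ intros l; apply pow_lt; lra. }
intros yr yi.
set (S := fun j => yr j * yr j + yi j * yi j).
assert (HS : forall j, 0 <= S j) by (intros j; unfold S; nra).
set (B := fun i l => if Compare_dec.lt_dec l i then tau * (eta * S l + S i / eta) else 0).
assert (Hterm : forall i l, (i < n)%nat -> (l < n)%nat ->
   (yr i * Tr i l - yi i * Ti i l) * yr l + (yr i * Ti i l + yi i * Tr i l) * yi l
   <= (if Nat.eq_dec i l then - lam * S l else 0) + B i l).
{ intros i l Hi Hl. unfold B. destruct (Nat.eq_dec i l) as [e|ne].
  - subst i. destruct (Compare_dec.lt_dec l l); [lia|].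
    assert (Tr l l <= - lam) by (apply Hlam2; auto).
    replace ((yr l * Tr l l - yi l * Ti l l) * yr l + (yr l * Ti l l + yi l * Tr l l) * yi l) with (Tr l l * S l) by (unfold S; ring).
    generalize (HS l); nra.
  - destruct (Compare_dec.lt_dec l i) as [lt|nlt].
    + destruct (Htau i l Hi Hl) as [H1 H2].
      set (X := yr i * yr l + yi i * yi l). set (Y := yr i * yi l - yi i * yr l).
      replace ((yr i * Tr i l - yi i * Ti i l) * yr l + (yr i * Ti i l + yi i * Tr i l) * yi l) with (Tr i l * X + Ti i l * Y) by (unfold X, Y; ring).
      assert (HX : Rabs X <= (eta * S l + S i / eta) / 2).
      { unfold X. eapply Rle_trans. apply Rabs_triang.
        replace (yr i * yr l) with (yr l * yr i) by ring. replace (yi i * yi l) with (yi l * yi i) by ring.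
        generalize (absyoung (yr l) (yr i) eta Heta) (absyoung (yi l) (yi i) eta Heta).
        unfold S. intros. replace ((eta * (yr l * yr l + yi l * yi l) + (yr i * yr i + yi i * yi i) / eta) / 2) with
         ((eta * (yr l * yr l) + yr i * yr i / eta) / 2 + (eta * (yi l * yi l) + yi i * yi i / eta) / 2) by (field; lra). lra. }
      assert (HY : Rabs Y <= (eta * S l + S i / eta) / 2).
      { unfold Y. eapply Rle_trans. apply Rabs_triang. rewrite Rabs_Ropp.
        replace (yr i * yi l) with (yi l * yr i) by ring. replace (yi i * yr l) with (yr l * yi i) by ring.
        generalize (absyoung (yi l) (yr i) eta Heta) (absyoung (yr l) (yi i) eta Heta).
        unfold S. intros. replace ((eta * (yr l * yr l + yi l * yi l) + (yr i * yr i + yi i * yi i) / eta) / 2) with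
         ((eta * (yi l * yi l) + yr i * yr i / eta) / 2 + (eta * (yr l * yr l) + yi i * yi i / eta) / 2) by (field; lra). lra. }
      assert (Tr i l * X <= tau * ((eta * S l + S i / eta) / 2)).
      { eapply Rle_trans. apply Rle_abs. rewrite Rabs_mult. apply Rmult_le_compat; auto using Rabs_pos. }
      assert (Ti i l * Y <= tau * ((eta * S l + S i / eta) / 2)).
      { eapply Rle_trans. apply Rle_abs. rewrite Rabs_mult. apply Rmult_le_compat; auto using Rabs_pos. }
      lra.
    + assert (i < l)%nat by lia. destruct (Hlow i l H Hl) as [-> ->].
      replace ((yr i * 0 - yi i * 0) * yr l + (yr i * 0 + yi i * 0) * yi l) with 0 by ring. lra. }
assert (Hrow : forall l, (l < n)%nat ->
  rho ^ l * (rsum n (fun i => yr i * Tr i l - yi i * Ti i l) * yr l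
          + rsum n (fun i => yr i * Ti i l + yi i * Tr i l) * yi l)
  <= - lam * (rho ^ l * S l) + (INR n * (tau * eta)) * (rho ^ l * S l)
     + tau / (eta * rho) * rsum n (fun i => rho ^ i * S i)).
{ intros l Hl.
  rewrite !rsum_mult_r, <- rsum_plus.
  assert (Hr : rsum n (fun i => (yr i * Tr i l - yi i * Ti i l) * yr l + (yr i * Ti i l + yi i * Tr i l) * yi l)
     <= - lam * S l + rsum n (fun i => B i l)).
  { eapply Rle_trans. apply rsum_le. intros i Hi. apply (Hterm i l Hi Hl).
    rewrite rsum_plus, rsum_single by auto. lra. }
  assert (Hk : 0 < rho ^ l) by (apply pow_lt; lra).
  assert (HB : rho ^ l * rsum n (fun i => B i l) <= INR n * (tau * eta) * (rho ^ l * S l) + tau / (eta * rho) * rsum n (fun i => rho ^ i * S i)).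
  { rewrite <- rsum_scal.
    assert (INR n * (tau * eta) * (rho ^ l * S l) = rsum n (fun _ => tau * eta * (rho ^ l * S l))) by (rewrite rsum_const; ring).
    rewrite H, <- rsum_scal, <- rsum_plus. apply rsum_le. intros i Hi.
    unfold B. destruct (Compare_dec.lt_dec l i) as [lt|nlt].
    - assert (Hp : rho ^ l * rho <= rho ^ i).
      { replace (rho ^ l * rho) with (rho ^ (Datatypes.S l)) by (simpl; ring). apply Rle_pow; auto. }
      assert (Hki : 0 < rho ^ i) by (apply pow_lt; lra).
      assert (rho ^ l * (S i / eta) <= rho ^ i * S i / (eta * rho)).
      { unfold Rdiv. rewrite Rinv_mult.
        replace (rho ^ i * S i * (/ eta * / rho)) with ((rho ^ i * / rho) * (S i * / eta)) by ring.
        apply Rmult_le_compat_r. apply Rmult_le_pos; [apply HS| left; apply Rinv_0_lt_compat; lra].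
        apply (Rmult_le_reg_r rho); [lra|]. rewrite Rmult_assoc, Rinv_l by lra. lra. }
      replace (rho ^ l * (tau * (eta * S l + S i / eta))) with (tau * eta * (rho ^ l * S l) + tau * (rho ^ l * (S i / eta))) by ring.
      replace (tau / (eta * rho) * (rho ^ i * S i)) with (tau * (rho ^ i * S i / (eta * rho))) by (field; lra).
      apply Rplus_le_compat_l. apply Rmult_le_compat_l; lra.
    - rewrite Rmult_0_r. apply Rplus_le_le_0_compat.
      apply Rmult_le_pos; [nra| apply Rmult_le_pos; [lra| apply HS]].
      apply Rmult_le_pos. unfold Rdiv; apply Rmult_le_pos; [lra| left; apply Rinv_0_lt_compat; nra].
      apply Rmult_le_pos; [left; apply pow_lt; lra| apply HS]. }
  assert (rho ^ l * rsum n (fun i => (yr i * Tr i l - yi i * Ti i l) * yr l + (yr i * Ti i l + yi i * Tr i l) * yi l)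
    <= rho ^ l * (- lam * S l + rsum n (fun i => B i l))) by (apply Rmult_le_compat_l; lra).
  lra. }
set (L := rsum n (fun i => rho ^ i * S i)).
assert (HL : 0 <= L) by (apply rsum_nonneg; intros; apply Rmult_le_pos; [left; apply pow_lt; lra| apply HS]).
eapply Rle_trans. apply rsum_le. apply Hrow.
rewrite !rsum_plus, rsum_const, !rsum_scal. fold L.
replace (rsum n (fun l => rho ^ l * (yr l * yr l + yi l * yi l))) with L by reflexivity.
assert (INR n * (tau * eta) <= lam / 4).
{ unfold eta. replace (INR n * (tau * (lam / (4 * N * tau)))) with (lam / 4 * (INR n / N)) by (field; nra).
  assert (INR n / N <= 1). { apply (Rmult_le_reg_r N); [lra|]. unfold Rdiv; rewrite Rmult_assoc, Rinv_l by lra. lra. }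
  nra. }
assert (INR n * (tau / (eta * rho)) <= lam / 4).
{ assert (0 < eta * rho) by nra.
  apply (Rmult_le_reg_r (eta * rho)); [auto|].
  replace (INR n * (tau / (eta * rho)) * (eta * rho)) with (INR n * tau) by (field; lra).
  assert (INR n * tau <= N * tau) by nra. nra. }
nra.
Qed.


Lemma LA n M : Hurwitz n M -> exists (Gr Gi : nat->nat->R) (k : nat -> R) (c : R), 0 < c /\ (forall l, 0 < k l) /\
 (forall z, rsum n (fun l => lin n (Gr l) z * lin n (Gr l) z + lin n (Gi l) z * lin n (Gi l) z) = rsum n (fun i => z i * z i)) /\
 (forall z, rsum n (fun l => k l * (lin n (Gr l) (mat_vec n M z) * lin n (Gr l) z + lin n (Gi l) (mat_vec n M z) * lin n (Gi l) z)) <= - c * rsum n (fun l => k l * (lin n (Gr l) z * lin n (Gr l) z + lin n (Gi l) z * lin n (Gi l) z))).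
Proof.
intros H.
destruct (LAmc.LA_mc n M H) as [Gr [Gi [Tr [Ti [H1 [H2 [H3 H4]]]]]]].
assert (H1' : forall i l, (i < l)%nat -> (l < n)%nat -> Tr i l = 0 /\ Ti i l = 0).
{ intros i l a b. apply H1; apply (ssrbool.introT (ssrnat.ltP)); auto. }
assert (H2' : forall l, (l < n)%nat -> Tr l l < 0).
{ intros l a. apply (ssrbool.elimT Rstruct.RltP). apply H2. apply (ssrbool.introT (ssrnat.ltP)); auto. }
destruct (TRI n Tr Ti H1' H2') as [k [c [Hc [Hk HT]]]].
exists Gr, Gi, k, c. split; auto. split; auto. split. exact H3.
intros z.
specialize (HT (fun i => lin n (Gr i) z) (fun i => lin n (Gi i) z)).
eapply Rle_trans; [|exact HT].
right. apply rsum_ext. intros l Hl.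
assert (Hl' : is_true (ssrnat.leq (Datatypes.S l) n)) by (apply (ssrbool.introT (ssrnat.ltP)); auto).
destruct (H4 z l Hl') as [E1 E2]. rewrite E1, E2. reflexivity.
Qed.


Lemma jc_const D c : jcont_on D (fun _ _ => c).
Proof. intros x t _ e He. exists 1; split; [lra|]. intros. rewrite Rminus_diag, Rabs_R0; lra. Qed.

Lemma jc_sub (D D' : R -> R -> Prop) f : (forall x t, D' x t -> D x t) -> jcont_on D f -> jcont_on D' f.
Proof. intros HD Hf x t Hx e He. destruct (Hf x t (HD _ _ Hx) e He) as [d [Hd H]].
  exists d; split; auto. Qed.

Lemma jc_plus D f g : jcont_on D f -> jcont_on D g -> jcont_on D (fun x t => f x t + g x t).
Proof. intros Hf Hg x t Hx e He.
  destruct (Hf x t Hx (e/2)) as [d1 [Hd1 H1]]; [lra|].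
  destruct (Hg x t Hx (e/2)) as [d2 [Hd2 H2]]; [lra|].
  exists (Rmin d1 d2); split; [apply Rmin_glb_lt; auto|].
  intros y s Hy Hyx Hst.
  assert (A1 := H1 y s Hy (Rlt_le_trans _ _ _ Hyx (Rmin_l _ _)) (Rlt_le_trans _ _ _ Hst (Rmin_l _ _))).
  assert (A2 := H2 y s Hy (Rlt_le_trans _ _ _ Hyx (Rmin_r _ _)) (Rlt_le_trans _ _ _ Hst (Rmin_r _ _))).
  replace (f y s + g y s - (f x t + g x t)) with ((f y s - f x t) + (g y s - g x t)) by ring.
  eapply Rle_lt_trans; [apply Rabs_triang|]. lra. Qed.

Lemma jc_opp D f : jcont_on D f -> jcont_on D (fun x t => - f x t).
Proof. intros Hf x t Hx e He. destruct (Hf x t Hx e He) as [d [Hd H]]. exists d; split; auto.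
  intros. replace (- f y s - - f x t) with (- (f y s - f x t)) by ring. rewrite Rabs_Ropp. auto. Qed.

Lemma jc_mult D f g : jcont_on D f -> jcont_on D g -> jcont_on D (fun x t => f x t * g x t).
Proof. intros Hf Hg x t Hx e He.
  set (a := Rabs (f x t)). set (b := Rabs (g x t)).
  assert (Ha : 0 <= a) by apply Rabs_pos. assert (Hb : 0 <= b) by apply Rabs_pos.
  set (e1 := Rmin 1 (e / (2 * (b + 1)))).
  set (e2 := Rmin 1 (e / (2 * (a + 1)))).
  assert (He1 : 0 < e1) by (apply Rmin_glb_lt; [lra| apply Rdiv_lt_0_compat; lra]).
  assert (He2 : 0 < e2) by (apply Rmin_glb_lt; [lra| apply Rdiv_lt_0_compat; lra]).
  destruct (Hf x t Hx e1 He1) as [d1 [Hd1 H1]].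
  destruct (Hg x t Hx e2 He2) as [d2 [Hd2 H2]].
  exists (Rmin d1 d2); split; [apply Rmin_glb_lt; auto|].
  intros y s Hy Hyx Hst.
  assert (A1 := H1 y s Hy (Rlt_le_trans _ _ _ Hyx (Rmin_l _ _)) (Rlt_le_trans _ _ _ Hst (Rmin_l _ _))).
  assert (A2 := H2 y s Hy (Rlt_le_trans _ _ _ Hyx (Rmin_r _ _)) (Rlt_le_trans _ _ _ Hst (Rmin_r _ _))).
  replace (f y s * g y s - f x t * g x t) with ((f y s - f x t) * g y s + f x t * (g y s - g x t)) by ring.
  eapply Rle_lt_trans; [apply Rabs_triang|]. rewrite !Rabs_mult.
  assert (Hgy : Rabs (g y s) <= b + 1).
  { replace (g y s) with ((g y s - g x t) + g x t) by ring. eapply Rle_trans; [apply Rabs_triang|].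
    generalize (Rmin_l 1 (e / (2 * (a + 1)))). fold e2. unfold b. lra. }
  assert (P1 : Rabs (f y s - f x t) * Rabs (g y s) <= e1 * (b + 1)).
  { apply Rmult_le_compat; auto using Rabs_pos; lra. }
  assert (P1' : e1 * (b + 1) <= e / 2).
  { assert (e1 <= e / (2 * (b+1))) by apply Rmin_r.
    apply (Rmult_le_compat_r (b+1)) in H; [|lra].
    replace (e / (2 * (b + 1)) * (b + 1)) with (e/2) in H by (field; lra). lra. }
  assert (P2 : Rabs (f x t) * Rabs (g y s - g x t) <= a * e2).
  { apply Rmult_le_compat_l; [apply Rabs_pos| lra]. }
  assert (P2' : a * e2 < e / 2).
  { assert (e2 <= e / (2 * (a+1))) by apply Rmin_r.
    apply (Rmult_le_compat_l a) in H; [|lra].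
    assert (a * (e / (2 * (a + 1))) < e / 2).
    { replace (a * (e / (2 * (a + 1)))) with ((e/2) * (a / (a+1))) by (field; lra).
      assert (a / (a+1) < 1). { apply (Rmult_lt_reg_r (a+1)); [lra|]. unfold Rdiv; rewrite Rmult_assoc, Rinv_l by lra. lra. }
      nra. }
    lra. }
  unfold a, b, e1, e2 in *. lra. Qed.

Lemma jc_scal D c f : jcont_on D f -> jcont_on D (fun x t => c * f x t).
Proof. intros; apply (jc_mult D (fun _ _ => c) f); auto using jc_const. Qed.

Lemma jc_minus D f g : jcont_on D f -> jcont_on D g -> jcont_on D (fun x t => f x t - g x t).
Proof. intros. apply (jc_plus D f (fun x t => - g x t)); auto using jc_opp. Qed.

Definition rc01 (f : R -> R) := jcont_on (fun x _ => I01 x) (fun x _ => f x).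

Lemma jc_rc01 D F t : jcont_on D F -> (forall x, I01 x -> D x t) -> rc01 (fun x => F x t).
Proof. intros HF HD x u Hx e He. destruct (HF x t (HD x Hx) e He) as [d [Hd H]].
  exists d; split; auto. intros y s Hy Hyx _. apply (H y t (HD y Hy) Hyx). rewrite Rminus_diag, Rabs_R0; lra. Qed.

Definition clamp (x : R) := Rmax 0 (Rmin 1 x).
Lemma clamp_I01 x : I01 (clamp x).
Proof. unfold clamp, I01. split. apply Rmax_l. apply Rmax_lub; [lra| apply Rmin_l]. Qed.
Lemma clamp_id x : I01 x -> clamp x = x.
Proof. unfold clamp, I01; intros [H1 H2]. rewrite Rmin_right by lra. rewrite Rmax_right by lra. auto. Qed.
Lemma clamp_lip x y : Rabs (clamp y - clamp x) <= Rabs (y - x).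
Proof. unfold clamp, Rmax, Rmin. repeat destruct Rle_dec; unfold Rabs; repeat destruct Rcase_abs; lra. Qed.

Lemma rc01_cont f : rc01 f -> forall x, continuity_pt (fun y => f (clamp y)) x.
Proof. intros Hf x e He. destruct (Hf (clamp x) 0 (clamp_I01 x) e He) as [d [Hd H]].
  exists d; split; auto. intros y [_ Hy]. simpl in *. unfold R_dist in *.
  apply (H (clamp y) 0). apply clamp_I01. eapply Rle_lt_trans; [apply clamp_lip| auto]. rewrite Rminus_diag, Rabs_R0; lra. Qed.

Lemma rc01_ccont f : rc01 f -> forall x, continuous (fun y => f (clamp y)) x.
Proof. intros Hf x. apply continuity_pt_filterlim. apply rc01_cont; auto. Qed.

Lemma rc01_int f a b : rc01 f -> 0 <= a -> a <= b -> b <= 1 -> ex_RInt f a b.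
Proof. intros Hf Ha Hab Hb.
  apply ex_RInt_ext with (fun y => f (clamp y)).
  { intros x Hx. rewrite Rmin_left in Hx by lra. rewrite Rmax_right in Hx by lra.
    rewrite clamp_id; auto. unfold I01; lra. }
  apply (@ex_RInt_continuous R_CompleteNormedModule). intros; apply rc01_ccont; auto. Qed.

Lemma RInt_plus' f g a b : ex_RInt f a b -> ex_RInt g a b -> RInt (fun x => f x + g x) a b = RInt f a b + RInt g a b.
Proof. intros; apply (RInt_plus f g a b); auto. Qed.
Lemma RInt_minus' f g a b : ex_RInt f a b -> ex_RInt g a b -> RInt (fun x => f x - g x) a b = RInt f a b - RInt g a b.
Proof. intros; apply (RInt_minus f g a b); auto. Qed.
Lemma RInt_scal' f a b k : ex_RInt f a b -> RInt (fun x => k * f x) a b = k * RInt f a b.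
Proof. intros; apply (RInt_scal f a b k); auto. Qed.
Lemma RInt_const' a b c : RInt (fun _ => c) a b = (b - a) * c.
Proof. apply (RInt_const a b c). Qed.
Lemma RInt_ext' (f g : R -> R) a b : a <= b -> (forall x, a < x < b -> f x = g x) -> RInt f a b = RInt g a b.
Proof. intros Hab H. apply RInt_ext. intros x Hx. rewrite Rmin_left in Hx by lra. rewrite Rmax_right in Hx by lra. apply H; auto. Qed.


Definition ext (f df : R -> R) (x : R) :=
  if Rlt_dec x 0 then f 0 + df 0 * x else if Rlt_dec 1 x then f 1 + df 1 * (x - 1) else f x.

Lemma ext_id f df x : I01 x -> ext f df x = f x.
Proof. unfold ext, I01; intros [H1 H2]. destruct (Rlt_dec x 0); [lra|]. destruct (Rlt_dec 1 x); [lra|]. auto. Qed.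

Lemma ext_deriv f df x : I01 x -> deriv_within I01 f x (df x) -> derivable_pt_lim (ext f df) x (df x).
Proof.
intros Hx H eps Heps.
destruct (H eps Heps) as [alp [Halp Hl]].
set (m0 := if Rlt_dec 0 x then x else 1).
set (m1 := if Rlt_dec x 1 then 1 - x else 1).
assert (Hm0 : 0 < m0) by (unfold m0; destruct (Rlt_dec 0 x); lra).
assert (Hm1 : 0 < m1) by (unfold m1; destruct (Rlt_dec x 1); lra).
assert (Hd : 0 < Rmin alp (Rmin m0 m1)) by (repeat apply Rmin_glb_lt; auto).
exists (mkposreal _ Hd). intros h Hh Hhd. simpl in Hhd.
assert (Ha : Rabs h < alp) by (eapply Rlt_le_trans; [apply Hhd| apply Rmin_l]).
assert (H0 : Rabs h < m0) by (eapply Rlt_le_trans; [apply Hhd| eapply Rle_trans; [apply Rmin_r| apply Rmin_l]]).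
assert (H1 : Rabs h < m1) by (eapply Rlt_le_trans; [apply Hhd| eapply Rle_trans; [apply Rmin_r| apply Rmin_r]]).
rewrite (ext_id f df x Hx).
unfold I01 in Hx.
unfold ext. destruct (Rlt_dec (x + h) 0) as [c1|c1].
{ assert (x = 0).
  { unfold m0 in H0. destruct (Rlt_dec 0 x); [|lra]. unfold Rabs in H0; destruct Rcase_abs in H0; lra. }
  subst x. replace ((f 0 + df 0 * (0 + h) - f 0) / h - df 0) with 0 by (field; auto).
  rewrite Rabs_R0; auto. }
destruct (Rlt_dec 1 (x + h)) as [c2|c2].
{ assert (x = 1).
  { unfold m1 in H1. destruct (Rlt_dec x 1); [|lra]. unfold Rabs in H1; destruct Rcase_abs in H1; lra. }
  subst x. replace ((f 1 + df 1 * (1 + h - 1) - f 1) / h - df 1) with 0 by (field; auto).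
  rewrite Rabs_R0; auto. }
apply (Hl h). split. split; auto. unfold I01; lra.
simpl. unfold R_dist. rewrite Rminus_0_r. auto.
Qed.

Lemma FTC F G a b : (forall x, I01 x -> derivable_pt_lim F x (G x)) -> rc01 G ->
  0 <= a -> a <= b -> b <= 1 -> RInt G a b = F b - F a.
Proof.
intros HF HG Ha Hab Hb.
assert (Hi : is_RInt (fun y => G (clamp y)) a b (minus (F b) (F a))).
{ apply (@is_RInt_derive R_CompleteNormedModule).
  - intros x Hx. rewrite Rmin_left in Hx by lra. rewrite Rmax_right in Hx by lra.
    rewrite clamp_id by (unfold I01; lra). apply is_derive_Reals. apply HF. unfold I01; lra.
  - intros x _. apply rc01_ccont; auto. }
transitivity (RInt (fun y => G (clamp y)) a b).
- apply RInt_ext. intros x Hx. rewrite Rmin_left in Hx by lra. rewrite Rmax_right in Hx by lra.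
  rewrite clamp_id; auto. unfold I01; lra.
- exact (@is_RInt_unique R_CompleteNormedModule _ _ _ _ Hi).
Qed.

Lemma rc01_plus f g : rc01 f -> rc01 g -> rc01 (fun x => f x + g x).
Proof. intros; apply (jc_plus _ (fun x _ => f x) (fun x _ => g x)); auto. Qed.
Lemma rc01_minus f g : rc01 f -> rc01 g -> rc01 (fun x => f x - g x).
Proof. intros; apply (jc_minus _ (fun x _ => f x) (fun x _ => g x)); auto. Qed.
Lemma rc01_mult f g : rc01 f -> rc01 g -> rc01 (fun x => f x * g x).
Proof. intros; apply (jc_mult _ (fun x _ => f x) (fun x _ => g x)); auto. Qed.
Lemma rc01_const c : rc01 (fun _ => c).
Proof. apply (jc_const _ c). Qed.
Lemma rc01_scal c f : rc01 f -> rc01 (fun x => c * f x).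
Proof. intros; apply rc01_mult; auto using rc01_const. Qed.

Lemma IBP f f1 f2 : (forall x, I01 x -> deriv_within I01 f x (f1 x)) ->
  (forall x, I01 x -> deriv_within I01 f1 x (f2 x)) -> rc01 f -> rc01 f1 -> rc01 f2 ->
  RInt (fun x => f x * f2 x) 0 1 = f 1 * f1 1 - f 0 * f1 0 - RInt (fun x => f1 x * f1 x) 0 1.
Proof.
intros D1 D2 C0 C1 C2.
assert (E : RInt (fun x => f1 x * f1 x + f x * f2 x) 0 1 = (ext f f1 1 * ext f1 f2 1) - (ext f f1 0 * ext f1 f2 0)).
{ apply (FTC (fun x => ext f f1 x * ext f1 f2 x)); try lra.
  - intros x Hx. replace (f1 x * f1 x + f x * f2 x) with (f1 x * ext f1 f2 x + ext f f1 x * f2 x).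
    apply (derivable_pt_lim_mult (ext f f1) (ext f1 f2)); apply ext_deriv; auto.
    rewrite !ext_id; auto.
  - apply rc01_plus; apply rc01_mult; auto. }
rewrite RInt_plus' in E by (apply rc01_int; try lra; apply rc01_mult; auto).
rewrite !ext_id in E by (unfold I01; lra). lra.
Qed.

Lemma CS g a b : a < b -> ex_RInt g a b -> ex_RInt (fun x => g x * g x) a b ->
  RInt g a b * RInt g a b <= (b - a) * RInt (fun x => g x * g x) a b.
Proof.
intros Hab Hg Hgg.
set (c := RInt g a b / (b - a)).
assert (Hc1 : ex_RInt (fun x => (-2 * c) * g x) a b) by (apply (ex_RInt_scal g a b (-2*c)); auto).
assert (Hc2 : ex_RInt (fun _ : R => c * c) a b) by (apply (ex_RInt_const a b (c*c))).
assert (Hc3 : ex_RInt (fun x => (-2 * c) * g x + c * c) a b) by (apply (ex_RInt_plus (fun x => (-2 * c) * g x) (fun _ => c * c)); auto).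
assert (Hc4 : ex_RInt (fun x => g x * g x + ((-2 * c) * g x + c * c)) a b) by (apply (ex_RInt_plus (fun x => g x * g x) (fun x => (-2 * c) * g x + c * c)); auto).
assert (H0 : 0 <= RInt (fun x => g x * g x + ((-2 * c) * g x + c * c)) a b).
{ apply RInt_ge_0; [lra| auto|]. intros x _.
  replace (g x * g x + (-2 * c * g x + c * c)) with ((g x - c) * (g x - c)) by ring. apply Rle_0_sqr. }
rewrite RInt_plus', RInt_plus', RInt_scal', RInt_const' in H0 by auto.
unfold c in H0.
assert (Hba : 0 < b - a) by lra.
set (I := RInt g a b) in *. set (J := RInt (fun x => g x * g x) a b) in *.
replace (J + (-2 * (I / (b - a)) * I + (b - a) * (I / (b - a) * (I / (b - a))))) with (J - I * I / (b - a)) in H0 by (field; lra).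
assert (I * I / (b - a) <= J) by lra.
apply (Rmult_le_compat_l (b - a)) in H; [|lra].
replace ((b - a) * (I * I / (b - a))) with (I * I) in H by (field; lra). lra.
Qed.


Lemma FTCw f f1 a b : (forall x, I01 x -> deriv_within I01 f x (f1 x)) -> rc01 f1 ->
  0 <= a -> a <= b -> b <= 1 -> RInt f1 a b = f b - f a.
Proof. intros D C Ha Hab Hb. rewrite (FTC (ext f f1) f1 a b); auto.
  rewrite !ext_id; auto; unfold I01; lra. intros x Hx; apply ext_deriv; auto. Qed.

Lemma AG f f1 : (forall x, I01 x -> deriv_within I01 f x (f1 x)) -> rc01 f1 -> f 1 = 0 ->
  f 0 * f 0 <= RInt (fun x => f1 x * f1 x) 0 1.
Proof. intros D C H1.
  assert (E : RInt f1 0 1 = - f 0) by (rewrite (FTCw f f1 0 1); auto; lra).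
  assert (H := CS f1 0 1 Rlt_0_1 (rc01_int f1 0 1 C (Rle_refl 0) Rle_0_1 (Rle_refl 1))
     (rc01_int _ 0 1 (rc01_mult f1 f1 C C) (Rle_refl 0) Rle_0_1 (Rle_refl 1))).
  rewrite E in H. lra. Qed.

Lemma PC f f1 : (forall x, I01 x -> deriv_within I01 f x (f1 x)) -> rc01 f -> rc01 f1 -> f 1 = 0 ->
  RInt (fun x => f x * f x) 0 1 <= RInt (fun x => f1 x * f1 x) 0 1.
Proof. intros D Cf C H1.
  set (C2 := RInt (fun x => f1 x * f1 x) 0 1).
  assert (Hgg : rc01 (fun x => f1 x * f1 x)) by (apply rc01_mult; auto).
  assert (Hpt : forall x, 0 < x < 1 -> f x * f x <= C2).
  { intros x Hx.
    assert (E : RInt f1 x 1 = - f x) by (rewrite (FTCw f f1 x 1); auto; lra).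
    assert (H := CS f1 x 1 (proj2 Hx) (rc01_int f1 x 1 C ltac:(lra) ltac:(lra) (Rle_refl 1))
       (rc01_int _ x 1 Hgg ltac:(lra) ltac:(lra) (Rle_refl 1))).
    rewrite E in H.
    assert (Ch : RInt (fun x => f1 x * f1 x) 0 x + RInt (fun x => f1 x * f1 x) x 1 = C2).
    { apply (RInt_Chasles (V:=R_CompleteNormedModule) (fun x => f1 x * f1 x) 0 x 1); apply rc01_int; auto; lra. }
    assert (P1 : 0 <= RInt (fun x => f1 x * f1 x) 0 x).
    { apply RInt_ge_0; [lra| apply rc01_int; auto; lra|]. intros; apply Rle_0_sqr. }
    assert (P2 : 0 <= RInt (fun x => f1 x * f1 x) x 1).
    { apply RInt_ge_0; [lra| apply rc01_int; auto; lra|]. intros; apply Rle_0_sqr. }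
    replace (- f x * - f x) with (f x * f x) in H by ring. nra. }
  assert (RInt (fun x => f x * f x) 0 1 <= RInt (fun _ => C2) 0 1).
  { apply RInt_le; [lra| apply rc01_int; auto using rc01_mult; lra| apply (ex_RInt_const 0 1 C2)|]. auto. }
  rewrite RInt_const' in H. lra. Qed.

Lemma UNIF D G t : jcont_on D G -> (forall x, I01 x -> D x t) -> forall e, 0 < e ->
  exists d, 0 < d /\ forall x s, I01 x -> D x s -> Rabs (s - t) < d -> Rabs (G x s - G x t) < e.
Proof.
intros HG HD e He.
assert (Hex : forall p, exists d : posreal, I01 p -> forall y s, D y s -> Rabs (y - p) < d -> Rabs (s - t) < d -> Rabs (G y s - G p t) < e/2).
{ intros p. destruct (classic (I01 p)) as [Hp|Hp].
  - destruct (HG p t (HD p Hp) (e/2)) as [d [Hd H]]; [lra|]. exists (mkposreal d Hd). intros _. exact H.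
  - exists (mkposreal 1 Rlt_0_1). intros; contradiction. }
set (delta := fun p => proj1_sig (constructive_indefinite_description _ (Hex p))).
assert (Hdelta : forall p, I01 p -> forall y s, D y s -> Rabs (y - p) < delta p -> Rabs (s - t) < delta p -> Rabs (G y s - G p t) < e/2).
{ intros p. exact (proj2_sig (constructive_indefinite_description _ (Hex p))). }
destruct (compactness_value_1d 0 1 delta) as [d Hd].
exists d; split; [apply cond_pos|].
intros x s Hx Hs Hst.
destruct (Rlt_dec (Rabs (G x s - G x t)) e) as [ok|nok]; auto.
exfalso. apply (Hd x Hx). intros [p [Hp [Hxp Hdp]]]. apply nok.
assert (A := Hdelta p Hp x s Hs Hxp ltac:(lra)).
assert (B := Hdelta p Hp x t (HD x Hx) Hxp ltac:(rewrite Rminus_diag, Rabs_R0; apply cond_pos)).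
replace (G x s - G x t) with ((G x s - G p t) - (G x t - G p t)) by ring.
eapply Rle_lt_trans; [apply Rabs_triang|]. rewrite Rabs_Ropp. lra.
Qed.

Lemma PARAM F dF t0 t : t0 < t ->
  jcont_on (fun x s => I01 x /\ t0 < s) F ->
  jcont_on (fun x s => I01 x /\ t0 < s) dF ->
  (forall x s, 0 < x < 1 -> t0 < s -> derivable_pt_lim (fun u => F x u) s (dF x s)) ->
  derivable_pt_lim (fun s => RInt (fun x => F x s) 0 1) t (RInt (fun x => dF x t) 0 1).
Proof.
intros Ht HF HdF HD eps Heps.
destruct (UNIF _ dF t HdF (fun x Hx => conj Hx Ht) (eps/2)) as [d [Hd Hu]]; [lra|].
assert (Hr : 0 < Rmin d ((t - t0)/2)) by (apply Rmin_glb_lt; lra).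
exists (mkposreal _ Hr). intros h Hh0 Hh. simpl in Hh.
assert (Hhd : Rabs h < d) by (eapply Rlt_le_trans; [apply Hh| apply Rmin_l]).
assert (Hht : Rabs h < (t - t0)/2) by (eapply Rlt_le_trans; [apply Hh| apply Rmin_r]).
set (s := t + h).
assert (Hs : t0 < s) by (unfold s, Rabs in *; destruct Rcase_abs in Hht; lra).
assert (Cs : rc01 (fun x => F x s)) by (apply (jc_rc01 _ F s HF); intros; split; auto).
assert (Ct : rc01 (fun x => F x t)) by (apply (jc_rc01 _ F t HF); intros; split; auto).
assert (Cd : rc01 (fun x => dF x t)) by (apply (jc_rc01 _ dF t HdF); intros; split; auto).
set (k := fun x => / h * (F x s - F x t) - dF x t).
assert (Ck : rc01 k) by (apply rc01_minus; auto; apply rc01_scal; apply rc01_minus; auto).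
assert (Ek : RInt k 0 1 = (RInt (fun x => F x s) 0 1 - RInt (fun x => F x t) 0 1) / h - RInt (fun x => dF x t) 0 1).
{ assert (X1 : ex_RInt (fun x => F x s) 0 1) by (apply rc01_int; auto; lra).
  assert (X2 : ex_RInt (fun x => F x t) 0 1) by (apply rc01_int; auto; lra).
  assert (X3 : ex_RInt (fun x => dF x t) 0 1) by (apply rc01_int; auto; lra).
  assert (X4 : ex_RInt (fun x => F x s - F x t) 0 1) by (apply rc01_int; auto using rc01_minus; lra).
  assert (X5 : ex_RInt (fun x => / h * (F x s - F x t)) 0 1) by (apply rc01_int; auto using rc01_minus, rc01_scal; lra).
  unfold k. rewrite (RInt_minus' (fun x => / h * (F x s - F x t))) by auto.
  rewrite (RInt_scal' (fun x => F x s - F x t)) by auto.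
  rewrite RInt_minus' by auto. unfold Rdiv; rewrite (Rmult_comm (/ h)); reflexivity. }
fold s. rewrite <- Ek.
assert (Hk : forall x, 0 < x < 1 -> Rabs (k x) < eps / 2).
{ intros x Hx. unfold k.
  destruct (Rlt_dec 0 h) as [hp|hn].
  - destruct (MVT_cor2 (fun u => F x u) (dF x) t s) as [c [Ec Hc]]; [unfold s; lra| |].
    { intros c Hc. apply HD; auto; lra. }
    rewrite Ec. replace (s - t) with h by (unfold s; ring).
    replace (/ h * (dF x c * h)) with (dF x c) by (field; lra).
    apply Hu; [unfold I01; lra| split; [unfold I01; lra| lra]|].
    rewrite Rabs_right in Hhd by lra. unfold s in Hc. rewrite Rabs_right by lra. lra.
  - assert (h < 0) by lra.
    destruct (MVT_cor2 (fun u => F x u) (dF x) s t) as [c [Ec Hc]]; [unfold s; lra| |].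
    { intros c Hc. apply HD; auto; lra. }
    replace (F x s - F x t) with (- (F x t - F x s)) by ring.
    rewrite Ec. replace (t - s) with (- h) by (unfold s; ring).
    replace (/ h * - (dF x c * - h)) with (dF x c) by (field; lra).
    apply Hu; [unfold I01; lra| split; [unfold I01; lra| lra]|].
    rewrite Rabs_left in Hhd by lra. unfold s in Hc. rewrite Rabs_left by lra. lra. }
assert (I1 : RInt k 0 1 <= RInt (fun _ => eps / 2) 0 1).
{ apply RInt_le; [lra| apply rc01_int; auto; lra| apply (ex_RInt_const 0 1 (eps/2))|].
  intros x Hx. specialize (Hk x Hx). unfold Rabs in Hk; destruct Rcase_abs in Hk; lra. }
assert (I2 : RInt (fun _ => - (eps / 2)) 0 1 <= RInt k 0 1).
{ apply RInt_le; [lra| apply (ex_RInt_const 0 1 (-(eps/2)))| apply rc01_int; auto; lra|].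
  intros x Hx. specialize (Hk x Hx). unfold Rabs in Hk; destruct Rcase_abs in Hk; lra. }
rewrite !RInt_const' in I1, I2.
unfold Rabs; destruct Rcase_abs; lra.
Qed.

Lemma RCONT F t0 : jcont_on (fun x s => I01 x /\ t0 <= s) F ->
  limit1_in (fun s => RInt (fun x => F x s) 0 1) (fun s => t0 <= s) (RInt (fun x => F x t0) 0 1) t0.
Proof.
intros HF eps Heps.
destruct (UNIF _ F t0 HF (fun x Hx => conj Hx (Rle_refl t0)) (eps/2)) as [d [Hd Hu]]; [lra|].
exists d; split; [lra|]. intros s [Hs Hsd]. simpl in *. unfold R_dist in *.
assert (Cs : rc01 (fun x => F x s)) by (apply (jc_rc01 _ F s HF); intros; split; auto).
assert (Ct : rc01 (fun x => F x t0)) by (apply (jc_rc01 _ F t0 HF); intros; split; auto; lra).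
rewrite <- RInt_minus' by (apply rc01_int; auto; lra).
assert (Ck : rc01 (fun x => F x s - F x t0)) by (apply rc01_minus; auto).
assert (Hk : forall x, 0 < x < 1 -> Rabs (F x s - F x t0) < eps / 2).
{ intros x Hx. apply Hu; auto. unfold I01; lra. split; auto; unfold I01; lra. }
assert (I1 : RInt (fun x => F x s - F x t0) 0 1 <= RInt (fun _ => eps / 2) 0 1).
{ apply RInt_le; [lra| apply rc01_int; auto; lra| apply (ex_RInt_const 0 1 (eps/2))|].
  intros x Hx. specialize (Hk x Hx). unfold Rabs in Hk; destruct Rcase_abs in Hk; lra. }
assert (I2 : RInt (fun _ => - (eps / 2)) 0 1 <= RInt (fun x => F x s - F x t0) 0 1).
{ apply RInt_le; [lra| apply (ex_RInt_const 0 1 (-(eps/2)))| apply rc01_int; auto; lra|].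
  intros x Hx. specialize (Hk x Hx). unfold Rabs in Hk; destruct Rcase_abs in Hk; lra. }
rewrite !RInt_const' in I1, I2.
unfold Rabs; destruct Rcase_abs; lra.
Qed.


Lemma der_rsum n (f df : nat -> R -> R) t : (forall i, (i < n)%nat -> derivable_pt_lim (f i) t (df i t)) ->
  derivable_pt_lim (fun s => rsum n (fun i => f i s)) t (rsum n (fun i => df i t)).
Proof. induction n; intros H; simpl.
  - apply (derivable_pt_lim_const 0).
  - apply (derivable_pt_lim_plus (fun s => rsum n (fun i => f i s)) (f n)).
    apply IHn; intros; apply H; lia. apply H; lia. Qed.

Lemma lim_rsum n (f : nat -> R -> R) D (l : nat -> R) t : (forall i, (i < n)%nat -> limit1_in (f i) D (l i) t) ->
  limit1_in (fun s => rsum n (fun i => f i s)) D (rsum n l) t.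
Proof. induction n as [|m IH]; intros H; simpl.
  - apply (limit_free (fun _ => 0) D 0 t).
  - apply (limit_plus (fun s => rsum m (fun i => f i s)) (f m)).
    apply IH; intros; apply H; lia. apply H; lia. Qed.

Lemma cont_lim f D t0 : continuity_pt f t0 -> limit1_in f D (f t0) t0.
Proof. intros Hc eps He. destruct (Hc eps He) as [alp [Ha H]]. exists alp; split; auto.
  intros x [Dx Hx]. destruct (Req_dec x t0). subst; simpl; unfold R_dist; rewrite Rminus_diag, Rabs_R0; lra.
  apply H. split; [split; [constructor|auto]|auto]. Qed.

Lemma GRON V V' t0 mu : (forall s, t0 < s -> derivable_pt_lim V s (V' s)) ->
  (forall s, t0 < s -> V' s <= - mu * V s) ->
  limit1_in V (fun s => t0 <= s) (V t0) t0 ->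
  forall t, t0 <= t -> V t <= exp (- mu * (t - t0)) * V t0.
Proof.
intros HD HV HL t Ht.
set (h := fun s => exp (mu * s) * V s).
assert (Dexp : forall s, derivable_pt_lim (fun s => exp (mu * s)) s (mu * exp (mu * s))).
{ intros s. apply is_derive_Reals. auto_derive; auto. ring. }
assert (Dh : forall s, t0 < s -> derivable_pt_lim h s (mu * exp (mu * s) * V s + exp (mu * s) * V' s)).
{ intros s Hs. apply (derivable_pt_lim_mult (fun s => exp (mu * s)) V); auto. }
assert (Hdec : forall u, t0 < u -> u <= t -> h t <= h u).
{ intros u Hu Hut. destruct (Rle_lt_or_eq_dec u t Hut) as [lt|eq]; [|subst; lra].
  destruct (MVT_cor2 h (fun s => mu * exp (mu * s) * V s + exp (mu * s) * V' s) u t lt) as [c [Ec Hc]].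
  { intros c Hc; apply Dh; lra. }
  assert (mu * exp (mu * c) * V c + exp (mu * c) * V' c <= 0).
  { assert (V' c <= - mu * V c) by (apply HV; lra). assert (0 < exp (mu * c)) by apply exp_pos. nra. }
  nra. }
assert (Hh0 : h t <= h t0).
{ destruct (Rle_lt_or_eq_dec t0 t Ht) as [lt|eq]; [|subst; lra].
  destruct (Rle_dec (h t) (h t0)) as [ok|nok]; auto. exfalso.
  assert (HLh : limit1_in h (fun s => t0 <= s) (h t0) t0).
  { apply (limit_mul (fun s => exp (mu * s)) V); auto. apply (cont_lim (fun s => exp (mu * s))).
    apply derivable_continuous_pt. exists (mu * exp (mu * t0)). apply Dexp. }
  destruct (HLh (h t - h t0)) as [alp [Ha H]]; [lra|].
  set (u := t0 + Rmin alp (t - t0) / 2).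
  assert (Hm : 0 < Rmin alp (t - t0)) by (apply Rmin_glb_lt; lra).
  assert (Hm1 := Rmin_l alp (t - t0)). assert (Hm2 := Rmin_r alp (t - t0)).
  assert (Hu : t0 < u <= t) by (unfold u; lra).
  assert (A := Hdec u (proj1 Hu) (proj2 Hu)).
  assert (B : R_dist (h u) (h t0) < h t - h t0).
  { apply H. split. unfold u; lra. simpl. unfold R_dist. rewrite Rabs_right; unfold u; lra. }
  unfold R_dist in B. unfold Rabs in B; destruct Rcase_abs in B; lra. }
unfold h in Hh0.
assert (E : exp (- mu * (t - t0)) = exp (- (mu * t)) * exp (mu * t0)).
{ rewrite <- exp_plus. f_equal. ring. }
rewrite E.
assert (0 < exp (- (mu * t))) by apply exp_pos.
apply (Rmult_le_compat_l (exp (- (mu * t)))) in Hh0; [|lra].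
rewrite <- Rmult_assoc, <- exp_plus in Hh0. replace (- (mu * t) + mu * t) with 0 in Hh0 by ring.
rewrite exp_0, Rmult_1_l in Hh0. lra.
Qed.


Lemma lin_lin n G u v g : lin n G (fun i => u i + v i * g) = lin n G u + g * lin n G v.
Proof. unfold lin. rewrite <- rsum_scal, <- rsum_plus. apply rsum_ext; intros; ring. Qed.

Lemma kbounds n (k : nat -> R) : (forall l, 0 < k l) -> exists kmin kmax, 0 < kmin /\ 0 <= kmax /\
  forall l, (l < n)%nat -> kmin <= k l <= kmax.
Proof. intros Hk. destruct (min_pos n (fun l => - k l)) as [lam [Hl H]].
  { intros l _. generalize (Hk l); lra. }
  exists lam, (rsum n k). split; auto. split. apply rsum_nonneg; intros; left; auto.
  intros l Hln. split. generalize (H l Hln); lra. apply rsum_term; auto. intros; left; auto. Qed.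

Lemma der_lin n G (Z : R -> nat -> R) (Zd : nat -> R) t :
  (forall i, (i < n)%nat -> derivable_pt_lim (fun s => Z s i) t (Zd i)) ->
  derivable_pt_lim (fun s => lin n G (Z s)) t (lin n G Zd).
Proof. intros H. unfold lin.
  apply (der_rsum n (fun i s => G i * Z s i) (fun i _ => G i * Zd i)).
  intros i Hi. apply (derivable_pt_lim_scal (fun s => Z s i)). auto. Qed.

Lemma lim_lin n G (Z : R -> nat -> R) D t :
  (forall i, (i < n)%nat -> limit1_in (fun s => Z s i) D (Z t i) t) ->
  limit1_in (fun s => lin n G (Z s)) D (lin n G (Z t)) t.
Proof. intros H. unfold lin.
  apply (lim_rsum n (fun i s => G i * Z s i) D (fun i => G i * Z t i)).
  intros i Hi. apply (limit_mul (fun _ => G i) (fun s => Z s i)); auto. apply (limit_free (fun _ => G i) D 0 t). Qed.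


Theorem lemma1 (eps y0 theta : R) (n : nat)
  (A : nat -> nat -> R) (B : nat -> R) (G0 : nat -> R)
  (Heps : 0 < eps) (Hy0 : -1 < y0 < 0) (Htheta : 0 <= theta <= 1)
  (HHurwitz : Hurwitz n (closed_loop A B G0)) (t0 : R) :
  exists Pi mu : R, 0 < Pi /\ 0 < mu /\
    forall (W1 W2 : R -> R -> R) (Z : R -> nat -> R),
      target_solution eps y0 theta n A B G0 t0 W1 W2 Z ->
      forall t (Ht : t0 <= t)
        (prt : Riemann_integrable (fun x => W1 x t ^ 2 + W2 x t ^ 2) 0 1)
        (pr0 : Riemann_integrable (fun x => W1 x t0 ^ 2 + W2 x t0 ^ 2) 0 1),
        sqrt (sq_norm n Z t prt)
          <= Pi * exp (- mu * (t - t0)) * sqrt (sq_norm n Z t0 pr0).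
Proof.
set (Mcl := closed_loop A B G0).
set (eps1 := eps / (1 + y0) ^ 2). set (eps2 := eps / (1 - y0) ^ 2). set (a := (1 + y0) / (1 - y0)).
assert (He1 : 0 < eps1) by (unfold eps1; apply Rdiv_lt_0_compat; [lra| apply pow_lt; lra]).
assert (He2 : 0 < eps2) by (unfold eps2; apply Rdiv_lt_0_compat; [lra| apply pow_lt; lra]).
assert (Ha : 0 < a) by (unfold a; apply Rdiv_lt_0_compat; lra).
assert (Hea : eps2 / a = a * eps1) by (unfold eps1, eps2, a; field; lra).
destruct (LA n Mcl HHurwitz) as [Gr [Gi [k [c [Hc [Hk [Hnorm Hlyap]]]]]]].
destruct (kbounds n k Hk) as [kmin [kmax [Hkmin [Hkmax Hkb]]]].
set (br := fun l => lin n (Gr l) B). set (bi := fun l => lin n (Gi l) B).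
set (beta := rsum n (fun l => k l * (br l * br l + bi l * bi l)) / c).
assert (Hbeta : 0 <= beta).
{ unfold beta. apply Rmult_le_pos; [| left; apply Rinv_0_lt_compat; auto].
  apply rsum_nonneg; intros l _. apply Rmult_le_pos; [left; auto| nra]. }
set (gam := (beta + 1) / eps1).
assert (Hgam : 0 < gam) by (unfold gam; apply Rdiv_lt_0_compat; lra).
assert (Hge : gam * eps1 = beta + 1) by (unfold gam; field; lra).
set (mu0 := Rmin c (Rmin eps1 (2 * eps2))).
assert (Hmu0 : 0 < mu0) by (unfold mu0; repeat apply Rmin_glb_lt; lra).
assert (Hmu1 : mu0 <= c) by apply Rmin_l.
assert (Hmu2 : mu0 <= eps1) by (eapply Rle_trans; [apply Rmin_r| apply Rmin_l]).
assert (Hmu3 : mu0 <= 2 * eps2) by (eapply Rle_trans; [apply Rmin_r| apply Rmin_r]).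
assert (Hga : 0 < gam / a) by (apply Rdiv_lt_0_compat; auto).
set (mlow := Rmin kmin (Rmin gam (gam / a))).
assert (Hml : 0 < mlow) by (unfold mlow; repeat apply Rmin_glb_lt; auto).
assert (Hml1 : mlow <= kmin) by apply Rmin_l.
assert (Hml2 : mlow <= gam) by (eapply Rle_trans; [apply Rmin_r| apply Rmin_l]).
assert (Hml3 : mlow <= gam / a) by (eapply Rle_trans; [apply Rmin_r| apply Rmin_r]).
set (Kup := kmax + gam + gam / a).
assert (HK : 0 < Kup) by (unfold Kup; lra).
exists (sqrt (Kup / mlow)), (mu0 / 2).
split. { apply sqrt_lt_R0. apply Rdiv_lt_0_compat; auto. }
split. { lra. }
intros W1 W2 Z Hsol t Ht prt pr0.
destruct Hsol as [Wx1 [Wx2 [Wxx1 [Wxx2 [CW1 [CW2 [CWx1 [CWx2 [CWxx1 [CWxx2 [HDx [Heat [BC [ZC ZD]]]]]]]]]]]]]].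
fold eps1 eps2 in Heat. fold a in BC. fold Mcl in ZD.
set (Dc := fun x t : R => I01 x /\ t0 <= t) in *.
set (Do := fun x t : R => I01 x /\ t0 < t) in *.
assert (CW1o : jcont_on Do W1) by (apply (jc_sub Dc); auto; unfold Dc, Do; intros x u [? ?]; split; auto; lra).
assert (CW2o : jcont_on Do W2) by (apply (jc_sub Dc); auto; unfold Dc, Do; intros x u [? ?]; split; auto; lra).
set (Y := fun l s => lin n (Gr l) (Z s)). set (X := fun l s => lin n (Gi l) (Z s)).
set (q := fun s => rsum n (fun l => k l * (Y l s * Y l s + X l s * X l s))).
set (I1 := fun s => RInt (fun x => W1 x s * W1 x s) 0 1).
set (I2 := fun s => RInt (fun x => W2 x s * W2 x s) 0 1).
set (V := fun s => q s + gam * (I1 s + / a * I2 s)).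
set (g := fun s => theta * W1 0 s + (1 - theta) * W2 0 s).
set (Zd := fun s i => mat_vec n Mcl (Z s) i + B i * g s).
set (qd := fun s => rsum n (fun l => k l * (2 * lin n (Gr l) (Zd s) * Y l s + 2 * lin n (Gi l) (Zd s) * X l s))).
set (I1d := fun s => RInt (fun x => 2 * W1 x s * (eps1 * Wxx1 x s)) 0 1).
set (I2d := fun s => RInt (fun x => 2 * W2 x s * (eps2 * Wxx2 x s)) 0 1).
set (V' := fun s => qd s + gam * (I1d s + / a * I2d s)).
assert (HD : forall s, t0 < s -> derivable_pt_lim V s (V' s)).
{ intros s Hs.
  assert (Dq : derivable_pt_lim q s (qd s)).
  { apply (der_rsum n (fun l u => k l * (Y l u * Y l u + X l u * X l u))
       (fun l u => k l * (2 * lin n (Gr l) (Zd u) * Y l u + 2 * lin n (Gi l) (Zd u) * X l u))).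
    intros l Hl.
    assert (dY : derivable_pt_lim (fun u => Y l u) s (lin n (Gr l) (Zd s))).
    { apply der_lin. intros i Hi. apply ZD; auto. }
    assert (dX : derivable_pt_lim (fun u => X l u) s (lin n (Gi l) (Zd s))).
    { apply der_lin. intros i Hi. apply ZD; auto. }
    replace (k l * (2 * lin n (Gr l) (Zd s) * Y l s + 2 * lin n (Gi l) (Zd s) * X l s)) with
      (k l * ((lin n (Gr l) (Zd s) * Y l s + Y l s * lin n (Gr l) (Zd s)) + (lin n (Gi l) (Zd s) * X l s + X l s * lin n (Gi l) (Zd s)))) by ring.
    apply (derivable_pt_lim_scal (fun u => Y l u * Y l u + X l u * X l u) (k l)).
    apply (derivable_pt_lim_plus (fun u => Y l u * Y l u) (fun u => X l u * X l u)).
    apply (derivable_pt_lim_mult (fun u => Y l u) (fun u => Y l u)); auto.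
    apply (derivable_pt_lim_mult (fun u => X l u) (fun u => X l u)); auto. }
  assert (D1 : derivable_pt_lim I1 s (I1d s)).
  { apply (PARAM (fun x u => W1 x u * W1 x u) (fun x u => 2 * W1 x u * (eps1 * Wxx1 x u)) t0 s Hs).
    - apply jc_mult; auto.
    - apply jc_mult. apply jc_scal; auto. apply jc_scal; auto.
    - intros x u Hx Hu. destruct (Heat x u Hx Hu) as [H1 _].
      replace (2 * W1 x u * (eps1 * Wxx1 x u)) with (eps1 * Wxx1 x u * W1 x u + W1 x u * (eps1 * Wxx1 x u)) by ring.
      apply (derivable_pt_lim_mult (fun v => W1 x v) (fun v => W1 x v)); auto. }
  assert (D2 : derivable_pt_lim I2 s (I2d s)).
  { apply (PARAM (fun x u => W2 x u * W2 x u) (fun x u => 2 * W2 x u * (eps2 * Wxx2 x u)) t0 s Hs).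
    - apply jc_mult; auto.
    - apply jc_mult. apply jc_scal; auto. apply jc_scal; auto.
    - intros x u Hx Hu. destruct (Heat x u Hx Hu) as [_ H2].
      replace (2 * W2 x u * (eps2 * Wxx2 x u)) with (eps2 * Wxx2 x u * W2 x u + W2 x u * (eps2 * Wxx2 x u)) by ring.
      apply (derivable_pt_lim_mult (fun v => W2 x v) (fun v => W2 x v)); auto. }
  unfold V, V'.
  apply (derivable_pt_lim_plus q (fun u => gam * (I1 u + / a * I2 u))); auto.
  apply (derivable_pt_lim_scal (fun u => I1 u + / a * I2 u) gam).
  apply (derivable_pt_lim_plus I1 (fun u => / a * I2 u)); auto.
  apply (derivable_pt_lim_scal I2 (/ a)); auto. }
assert (HY : forall s l, (l < n)%nat -> 0 <= k l * (Y l s * Y l s + X l s * X l s)).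
{ intros s l Hl. apply Rmult_le_pos; [left; auto| nra]. }
assert (Hq0 : forall s, 0 <= q s) by (intros s; apply rsum_nonneg; auto).
assert (rcW1 : forall s, t0 <= s -> rc01 (fun x => W1 x s)) by (intros s Hs; apply (jc_rc01 Dc); auto; intros; split; auto).
assert (rcW2 : forall s, t0 <= s -> rc01 (fun x => W2 x s)) by (intros s Hs; apply (jc_rc01 Dc); auto; intros; split; auto).
assert (HI1 : forall s, t0 <= s -> 0 <= I1 s).
{ intros s Hs. apply RInt_ge_0; [lra| apply rc01_int; auto using rc01_mult; lra|]. intros; apply Rle_0_sqr. }
assert (HI2 : forall s, t0 <= s -> 0 <= I2 s).
{ intros s Hs. apply RInt_ge_0; [lra| apply rc01_int; auto using rc01_mult; lra|]. intros; apply Rle_0_sqr. }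
assert (HB : forall s, t0 < s -> V' s <= - mu0 * V s).
{ intros s Hs.
  destruct (BC s Hs) as [B1 [B2 [B3 B4]]].
  assert (rx1 : rc01 (fun x => Wx1 x s)) by (apply (jc_rc01 Do); auto; intros; split; auto).
  assert (rx2 : rc01 (fun x => Wx2 x s)) by (apply (jc_rc01 Do); auto; intros; split; auto).
  assert (rxx1 : rc01 (fun x => Wxx1 x s)) by (apply (jc_rc01 Do); auto; intros; split; auto).
  assert (rxx2 : rc01 (fun x => Wxx2 x s)) by (apply (jc_rc01 Do); auto; intros; split; auto).
  assert (d1 : forall x, I01 x -> deriv_within I01 (fun y => W1 y s) x (Wx1 x s)) by (intros x Hx; apply (HDx x s Hx Hs)).
  assert (d2 : forall x, I01 x -> deriv_within I01 (fun y => W2 y s) x (Wx2 x s)) by (intros x Hx; apply (HDx x s Hx Hs)).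
  assert (d3 : forall x, I01 x -> deriv_within I01 (fun y => Wx1 y s) x (Wxx1 x s)) by (intros x Hx; apply (HDx x s Hx Hs)).
  assert (d4 : forall x, I01 x -> deriv_within I01 (fun y => Wx2 y s) x (Wxx2 x s)) by (intros x Hx; apply (HDx x s Hx Hs)).
  set (J1 := RInt (fun x => Wx1 x s * Wx1 x s) 0 1).
  set (J2 := RInt (fun x => Wx2 x s * Wx2 x s) 0 1).
  assert (IB1 := IBP (fun y => W1 y s) (fun y => Wx1 y s) (fun y => Wxx1 y s) d1 d3 (rcW1 s ltac:(lra)) rx1 rxx1).
  assert (IB2 := IBP (fun y => W2 y s) (fun y => Wx2 y s) (fun y => Wxx2 y s) d2 d4 (rcW2 s ltac:(lra)) rx2 rxx2).
  simpl in IB1, IB2. fold J1 in IB1. fold J2 in IB2.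
  assert (AG1 := AG (fun y => W1 y s) (fun y => Wx1 y s) d1 rx1 B3). simpl in AG1. fold J1 in AG1.
  assert (PC1 := PC (fun y => W1 y s) (fun y => Wx1 y s) d1 (rcW1 s ltac:(lra)) rx1 B3). simpl in PC1. fold J1 in PC1.
  assert (PC2 := PC (fun y => W2 y s) (fun y => Wx2 y s) d2 (rcW2 s ltac:(lra)) rx2 B4). simpl in PC2. fold J2 in PC2.
  fold (I1 s) in PC1. fold (I2 s) in PC2.
  assert (EI1 : I1d s = 2 * eps1 * RInt (fun x => W1 x s * Wxx1 x s) 0 1).
  { unfold I1d. rewrite <- RInt_scal'. apply RInt_ext'; [lra| intros; ring].
    apply rc01_int; [apply (rc01_mult (fun x => W1 x s) (fun x => Wxx1 x s)); [apply rcW1; lra| auto]| lra| lra| lra]. }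
  assert (EI2 : I2d s = 2 * eps2 * RInt (fun x => W2 x s * Wxx2 x s) 0 1).
  { unfold I2d. rewrite <- RInt_scal'. apply RInt_ext'; [lra| intros; ring].
    apply rc01_int; [apply (rc01_mult (fun x => W2 x s) (fun x => Wxx2 x s)); [apply rcW2; lra| auto]| lra| lra| lra]. }
  assert (Hg : g s = W1 0 s) by (unfold g; rewrite <- B2; ring).
  assert (Hbd : eps1 * Wx1 0 s + eps2 / a * Wx2 0 s = 0).
  { rewrite Hea. replace (Wx1 0 s) with (- (a * Wx2 0 s)) by lra. ring. }
  assert (Hsplit : gam * (I1d s + / a * I2d s) = gam * (- 2 * W1 0 s * (eps1 * Wx1 0 s + eps2 / a * Wx2 0 s)) - 2 * (gam * eps1) * J1 - 2 * gam * (eps2 / a) * J2).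
  { rewrite EI1, EI2, IB1, IB2, B3, B4, <- B2. unfold Rdiv. field. lra. }
  rewrite Hbd, Hge in Hsplit.
  set (S := fun l => Y l s * Y l s + X l s * X l s).
  assert (Hqd : qd s = 2 * rsum n (fun l => k l * (lin n (Gr l) (mat_vec n Mcl (Z s)) * Y l s + lin n (Gi l) (mat_vec n Mcl (Z s)) * X l s))
                      + rsum n (fun l => k l * (2 * g s * (br l * Y l s + bi l * X l s)))).
  { unfold qd. rewrite <- rsum_scal, <- rsum_plus. apply rsum_ext. intros l Hl.
    unfold Zd. rewrite !lin_lin. unfold br, bi. ring. }
  assert (L1 := Hlyap (Z s)). fold (Y) in L1.
  assert (L1' : rsum n (fun l => k l * (lin n (Gr l) (mat_vec n Mcl (Z s)) * Y l s + lin n (Gi l) (mat_vec n Mcl (Z s)) * X l s)) <= - c * q s).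
  { exact L1. }
  assert (L2 : rsum n (fun l => k l * (2 * g s * (br l * Y l s + bi l * X l s))) <= c * q s + beta * (g s * g s)).
  { unfold beta, q. rewrite <- rsum_scal.
    replace (rsum n (fun l => k l * (br l * br l + bi l * bi l)) / c * (g s * g s)) with
      (rsum n (fun l => g s * g s / c * (k l * (br l * br l + bi l * bi l)))) by (rewrite rsum_scal; field; lra).
    rewrite <- rsum_plus. apply rsum_le. intros l Hl.
    assert (y1 := young (Y l s) (g s * br l) c Hc). assert (y2 := young (X l s) (g s * bi l) c Hc).
    assert (Hkl : 0 < k l) by auto.
    replace (c * (k l * (Y l s * Y l s + X l s * X l s)) + g s * g s / c * (k l * (br l * br l + bi l * bi l)))
      with (k l * ((c * (Y l s * Y l s) + g s * br l * (g s * br l) / c) + (c * (X l s * X l s) + g s * bi l * (g s * bi l) / c))) by (field; lra).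
    apply Rmult_le_compat_l; [lra|]. nra. }
  assert (Hgs : g s * g s <= J1) by (rewrite Hg; auto).
  assert (HJ2 : 0 <= J2) by (generalize (HI2 s ltac:(lra)); lra).
  unfold V'. rewrite Hsplit, Hqd.
  unfold V.
  assert (A1 : - c * q s <= - mu0 * q s) by (generalize (Hq0 s); nra).
  assert (A2 : beta * (g s * g s) <= beta * J1) by (apply Rmult_le_compat_l; auto).
  assert (HI1s := HI1 s ltac:(lra)). assert (HI2s := HI2 s ltac:(lra)).
  assert (A3 : - (beta + 1) * J1 <= - (mu0 * gam) * I1 s).
  { assert (mu0 * gam <= beta + 1) by (rewrite <- Hge; nra). nra. }
  assert (A4 : - (2 * gam * (eps2 / a)) * J2 <= - (mu0 * gam * / a) * I2 s).
  { assert (mu0 * gam * / a <= 2 * gam * (eps2 / a)).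
    { unfold Rdiv. assert (0 < / a) by (apply Rinv_0_lt_compat; auto). nra. }
    assert (0 <= mu0 * gam * / a) by (assert (0 < / a) by (apply Rinv_0_lt_compat; auto); nra).
    nra. }
  nra. }
assert (HL : limit1_in V (fun s => t0 <= s) (V t0) t0).
{ unfold V.
  apply (limit_plus q (fun u => gam * (I1 u + / a * I2 u))).
  - apply (lim_rsum n (fun l u => k l * (Y l u * Y l u + X l u * X l u))). intros l Hl.
    assert (LY : limit1_in (fun u => Y l u) (fun s => t0 <= s) (Y l t0) t0).
    { apply lim_lin. intros i Hi. apply ZC; auto; lra. }
    assert (LX : limit1_in (fun u => X l u) (fun s => t0 <= s) (X l t0) t0).
    { apply lim_lin. intros i Hi. apply ZC; auto; lra. }
    apply (limit_mul (fun _ => k l) (fun u => Y l u * Y l u + X l u * X l u)).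
    apply (limit_free (fun _ => k l) _ 0 t0).
    apply (limit_plus (fun u => Y l u * Y l u) (fun u => X l u * X l u)).
    apply (limit_mul (fun u => Y l u) (fun u => Y l u)); auto.
    apply (limit_mul (fun u => X l u) (fun u => X l u)); auto.
  - apply (limit_mul (fun _ => gam) (fun u => I1 u + / a * I2 u)).
    apply (limit_free (fun _ => gam) _ 0 t0).
    apply (limit_plus I1 (fun u => / a * I2 u)).
    apply (RCONT (fun x u => W1 x u * W1 x u)). apply jc_mult; auto.
    apply (limit_mul (fun _ => / a) I2).
    apply (limit_free (fun _ => / a) _ 0 t0).
    apply (RCONT (fun x u => W2 x u * W2 x u)). apply jc_mult; auto. }
assert (HG := GRON V V' t0 mu0 HD HB HL t Ht).
set (N := fun s => I1 s + I2 s + rsum n (fun i => Z s i * Z s i)).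
assert (HZ0 : forall s, 0 <= rsum n (fun i => Z s i * Z s i)) by (intros; apply rsum_nonneg; intros; apply Rle_0_sqr).
assert (HN : forall s, t0 <= s -> mlow * N s <= V s <= Kup * N s).
{ intros s Hs.
  assert (EZ : rsum n (fun l => Y l s * Y l s + X l s * X l s) = rsum n (fun i => Z s i * Z s i)) by apply Hnorm.
  assert (Q1 : kmin * rsum n (fun i => Z s i * Z s i) <= q s).
  { rewrite <- EZ, <- rsum_scal. apply rsum_le. intros l Hl. apply Rmult_le_compat_r; [nra| apply Hkb; auto]. }
  assert (Q2 : q s <= kmax * rsum n (fun i => Z s i * Z s i)).
  { rewrite <- EZ, <- rsum_scal. apply rsum_le. intros l Hl. apply Rmult_le_compat_r; [nra| apply Hkb; auto]. }
  assert (HI1s := HI1 s Hs). assert (HI2s := HI2 s Hs). assert (HZs := HZ0 s).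
  unfold V, N. split.
  - assert (mlow * rsum n (fun i => Z s i * Z s i) <= kmin * rsum n (fun i => Z s i * Z s i)) by nra.
    assert (mlow * I1 s <= gam * I1 s) by nra.
    assert (mlow * I2 s <= gam * / a * I2 s) by (unfold Rdiv in Hml3; nra).
    nra.
  - assert (kmax * rsum n (fun i => Z s i * Z s i) <= Kup * rsum n (fun i => Z s i * Z s i)) by (unfold Kup; nra).
    assert (gam * I1 s <= Kup * I1 s) by (unfold Kup; nra).
    assert (gam * / a * I2 s <= Kup * I2 s) by (unfold Kup; unfold Rdiv in Hga; nra).
    nra. }
assert (HSQ : forall s (Hs : t0 <= s) (pr : Riemann_integrable (fun x => W1 x s ^ 2 + W2 x s ^ 2) 0 1), sq_norm n Z s pr = N s).
{ intros s Hs pr. unfold sq_norm, N. rewrite <- RInt_Reals.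
  rewrite (RInt_ext' _ (fun x => W1 x s * W1 x s + W2 x s * W2 x s)) by (try lra; intros; ring).
  rewrite RInt_plus' by (apply rc01_int; auto using rc01_mult; lra).
  f_equal. apply rsum_ext; intros; ring. }
rewrite (HSQ t Ht prt), (HSQ t0 (Rle_refl t0) pr0).
destruct (HN t Ht) as [N1 _]. destruct (HN t0 (Rle_refl t0)) as [_ N2].
set (E := exp (- mu0 * (t - t0))) in *.
assert (HE : 0 < E) by apply exp_pos.
assert (HNt0 : 0 <= N t0) by (unfold N; generalize (HI1 t0 (Rle_refl _)) (HI2 t0 (Rle_refl _)) (HZ0 t0); lra).
assert (HNt : 0 <= N t) by (unfold N; generalize (HI1 t Ht) (HI2 t Ht) (HZ0 t); lra).
assert (Hfin : N t <= Kup / mlow * E * N t0).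
{ assert (mlow * N t <= E * (Kup * N t0)) by (eapply Rle_trans; [apply N1| eapply Rle_trans; [apply HG| apply Rmult_le_compat_l; lra]]).
  apply (Rmult_le_reg_l mlow); auto.
  replace (mlow * (Kup / mlow * E * N t0)) with (E * (Kup * N t0)) by (field; lra). lra. }
assert (HE2 : E = exp (- (mu0 / 2) * (t - t0)) * exp (- (mu0 / 2) * (t - t0))).
{ unfold E. rewrite <- exp_plus. f_equal. field. }
eapply Rle_trans. apply sqrt_le_1_alt. apply Hfin.
rewrite sqrt_mult_alt. rewrite sqrt_mult_alt. rewrite HE2, sqrt_square. lra.
left; apply exp_pos.
apply Rlt_le, Rdiv_lt_0_compat; auto.
apply Rmult_le_pos; [apply Rlt_le, Rdiv_lt_0_compat; auto| lra].
Qed.
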